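(* Let $f$ satisfy the $L$-descent condition for some $L>0$ and let $\{x^k\}$ be generated by Algorithm IRG with $\rho_k=\varepsilon_k$ for all $k$, where the stepsizes are either diminishing ($t_k>0$, $t_k\downarrow0$, $\sum_{k=1}^\infty t_k=\infty$) or of constant type (there exist $\delta\in(0,2)$ and $\delta'>0$ with $\delta'\le\frac{2-\delta}{L}$ and $t_k\in[\delta',\frac{2-\delta}{L}]$ for all $k$). Assume $\inf_k f(x^k)>-\infty$. Then: (i) $\varepsilon_k\downarrow0$ and $r_k\downarrow0$; (ii) every accumulation point of $\{x^k\}$ is a stationary point of $f$; (iii) if $\{x^k\}$ is bounded, its set of accumulation points is nonempty, compact and connected; (iv) if $\{x^k\}$ has an isolated accumulation point, then $\{x^k\}$ converges to it. Moreover, in the constant-type case, $\nabla f(x^k)\to0$ as $k\to\infty$.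
   Context: Algorithm IRG (general inexact reduced gradient framework). Let $f:\mathbb R^n\to\mathbb R$ be continuously differentiable. Parameters: initial point $x^1\in\mathbb R^n$, initial radii $\varepsilon_1>0$, $r_1>0$, reduction factors $\mu,\theta\in(0,1)$, and a sequence $\{\rho_k\}$ of positive numbers. For $k=1,2,\dots$: (1) choose $g^k\in\mathbb R^n$ with $\|g^k-\nabla f(x^k)\|\le\min\{\varepsilon_k,\rho_k\}$; (2) if $\|g^k\|\le r_k+\varepsilon_k$, set $r_{k+1}=\mu r_k$, $\varepsilon_{k+1}=\theta\varepsilon_k$, $d^k=0$; otherwise set $r_{k+1}=r_k$, $\varepsilon_{k+1}=\varepsilon_k$ and $d^k=-\frac{\|g^k\|-\varepsilon_k}{\|g^k\|}g^k$; (3) choose a stepsize $t_k>0$ by some rule; (4) set $x^{k+1}=x^k+t_kd^k$. $f$ satisfies the $L$-descent condition if $f(y)\le f(x)+\langle\nabla f(x),y-x\rangle+\frac L2\|y-x\|^2$ for all $x,y\in\mathbb R^n$. *)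

(* Defs.v *)
From HB Require Import structures.
From mathcomp Require Import all_boot all_order all_algebra.
From mathcomp Require Import all_classical all_reals all_analysis.
Set Implicit Arguments. Unset Strict Implicit. Unset Printing Implicit Defensive.
Import Order.TTheory GRing.Theory Num.Theory.
Import numFieldNormedType.Exports.
Local Open Scope classical_set_scope.
Local Open Scope ring_scope.

(* Euclidean inner product and Euclidean norm on R^n = 'rV[R]_n
   (the library's norm on matrices is the max-norm, so we define ours). *)
Definition dotv {R : realType} {n : nat} (u v : 'rV[R]_n) : R :=
  \sum_(i < n) u 0 i * v 0 i.
Definition enorm {R : realType} {n : nat} (v : 'rV[R]_n) : R :=
  Num.sqrt (dotv v v).

Definition C1_with_gradient {R : realType} {n : nat}
  (f : 'rV[R]_n -> R) (gf : 'rV[R]_n -> 'rV[R]_n) : Prop :=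
  (forall x, differentiable f x /\ forall v, 'D_v f x = dotv (gf x) v)
  /\ continuous gf.

Definition L_descent {R : realType} {n : nat}
  (f : 'rV[R]_n -> R) (gf : 'rV[R]_n -> 'rV[R]_n) (L : R) : Prop :=
  forall x y, f y <= f x + dotv (gf x) (y - x) + L / 2 * enorm (y - x) ^+ 2.

(* Sequences generated by Algorithm IRG (indices shifted: iteration k = 1,2,...
   of the paper is index k-1 = 0,1,... here). *)
Definition IRG_sequence {R : realType} {n : nat}
  (gf : 'rV[R]_n -> 'rV[R]_n) (mu theta : R) (rho : nat -> R)
  (x g d : nat -> 'rV[R]_n) (eps r t : nat -> R) : Prop :=
  [/\ 0 < eps 0%N /\ 0 < r 0%N, 0 < mu < 1, 0 < theta < 1,
      (forall k, 0 < rho k) &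
      forall k,
      [/\ enorm (g k - gf (x k)) <= Num.min (eps k) (rho k),
          (if enorm (g k) <= r k + eps k then
             [/\ r k.+1 = mu * r k, eps k.+1 = theta * eps k & d k = 0]
           else
             [/\ r k.+1 = r k, eps k.+1 = eps k &
                 d k = - ((enorm (g k) - eps k) / enorm (g k)) *: g k]),
          0 < t k &
          x k.+1 = x k + t k *: d k]].

Definition diminishing_steps {R : realType} (t : nat -> R) : Prop :=
  [/\ (forall k, 0 < t k), (forall k, t k.+1 <= t k), t @ \oo --> 0
    & series t @ \oo --> +oo].

Definition constant_type_steps {R : realType} (L : R) (t : nat -> R) : Prop :=
  exists delta delta' : R,
    [/\ 0 < delta < 2, 0 < delta', delta' <= (2 - delta) / L &
        forall k, delta' <= t k <= (2 - delta) / L].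

Definition acc_points {R : realType} {n : nat} (x : nat -> 'rV[R]_n)
  : set 'rV[R]_n := cluster (x @ \oo).

Definition isolated_in {T : topologicalType} (A : set T) (p : T) : Prop :=
  A p /\ exists U, nbhs p U /\ U `&` A = [set p].

(* Main.v *)
Require Import Defs.
From HB Require Import structures.
From mathcomp Require Import all_boot all_order all_algebra.
From mathcomp Require Import all_classical all_reals all_analysis.
Import Order.TTheory GRing.Theory Num.Theory.
Import numFieldNormedType.Exports.
Local Open Scope classical_set_scope.
Local Open Scope ring_scope.
From mathcomp Require Import ring lra zify.
Section E.
Context {R : realType} {n : nat}.
Implicit Types u v w : 'rV[R]_n.

Lemma dotvC u v : dotv u v = dotv v u.
Proof. by rewrite /dotv; apply: eq_bigr => i _; rewrite mulrC. Qed.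
Lemma dotvDl u w v : dotv (u + w) v = dotv u v + dotv w v.
Proof. by rewrite /dotv -big_split; apply: eq_bigr => i _; rewrite mxE mulrDl. Qed.
Lemma dotvDr u w v : dotv v (u + w) = dotv v u + dotv v w.
Proof. by rewrite dotvC dotvDl !(dotvC v). Qed.
Lemma dotvZl a u v : dotv (a *: u) v = a * dotv u v.
Proof. by rewrite /dotv mulr_sumr; apply: eq_bigr => i _; rewrite mxE mulrA. Qed.
Lemma dotvZr a u v : dotv u (a *: v) = a * dotv u v.
Proof. by rewrite dotvC dotvZl dotvC. Qed.
Lemma dotvNl u v : dotv (- u) v = - dotv u v.
Proof. by rewrite -scaleN1r dotvZl mulN1r. Qed.
Lemma dotvNr u v : dotv u (- v) = - dotv u v.
Proof. by rewrite dotvC dotvNl dotvC. Qed.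
Lemma dotvv_ge0 v : 0 <= dotv v v.
Proof. by rewrite /dotv; apply: sumr_ge0 => i _; rewrite -expr2 sqr_ge0. Qed.
Lemma enorm_ge0 v : 0 <= enorm v.
Proof. exact: sqrtr_ge0. Qed.
Lemma enorm_sq v : enorm v ^+ 2 = dotv v v.
Proof. by rewrite /enorm sqr_sqrtr // dotvv_ge0. Qed.
Lemma enormZ a v : enorm (a *: v) = `|a| * enorm v.
Proof.
by rewrite /enorm dotvZl dotvZr mulrA -expr2 sqrtrM ?sqr_ge0 // sqrtr_sqr.
Qed.
Lemma enormN v : enorm (- v) = enorm v.
Proof. by rewrite -scaleN1r enormZ normrN normr1 mul1r. Qed.
Lemma enorm0 : enorm (0 : 'rV[R]_n) = 0.
Proof. by rewrite -(scale0r 0) enormZ normr0 mul0r. Qed.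

Lemma CS u v : dotv u v <= enorm u * enorm v.
Proof.
have [A0|Apos] := eqVneq (dotv u u) 0.
  have ui : forall i, u 0 i = 0.
    have H : forall i, 0 <= u 0 i * u 0 i by move=> j; rewrite -expr2 sqr_ge0.
    move=> i; move/psumr_eq0P: A0 => /(_ (fun i _ => H i)) /(_ i isT) /eqP.
    by rewrite mulf_eq0 orbb => /eqP.
  have -> : dotv u v = 0 by rewrite /dotv big1 // => i _; rewrite ui mul0r.
  by rewrite mulr_ge0 // enorm_ge0.
have Ap : 0 < dotv u u by rewrite lt_def Apos dotvv_ge0.
set A := dotv u u in Apos Ap *; set B := dotv v v; set P := dotv u v.
have key : P ^+ 2 <= A * B.
  have := dotvv_ge0 ((- P / A) *: u + v).
  rewrite !dotvDl !dotvDr !dotvZl !dotvZr (dotvC v u) -/A -/B -/P.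
  have -> : - P / A * (- P / A * A) + - P / A * P + (- P / A * P + B) = (A * B - P ^+ 2) / A.
    by field.
  by rewrite pmulr_lge0 ?invr_gt0 // subr_ge0.
have [Ple0|Pgt0] := lerP P 0.
  by rewrite (le_trans Ple0) // mulr_ge0 // enorm_ge0.
rewrite -(@ler_pXn2r _ 2) //; last by rewrite nnegrE mulr_ge0 // enorm_ge0.
  by rewrite exprMn !enorm_sq.
by rewrite nnegrE ltW.
Qed.

Lemma mxnorm_le u : `|u| <= enorm u.
Proof.
have -> : `|u| = mx_norm u by [].
rewrite mx_normrE; apply: bigmax_le; first exact: enorm_ge0.
move=> [i j] _ /=; rewrite (ord1 i).
rewrite -(sqrtr_sqr (u 0 j)) /enorm /dotv.
rewrite ler_sqrt; last by apply: sumr_ge0 => k _; rewrite -expr2 sqr_ge0.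
rewrite (bigD1 j) //= -expr2 lerDl; apply: sumr_ge0 => k _; by rewrite -expr2 sqr_ge0.
Qed.
End E.

Section IRG.
Variables (R : realType) (n : nat)
  (f : 'rV[R]_n -> R) (gf : 'rV[R]_n -> 'rV[R]_n) (L : R)
  (mu theta : R) (x g d : nat -> 'rV[R]_n) (eps r t : nat -> R).
Hypothesis HL : 0 < L.
Hypothesis HD : L_descent f gf L.
Hypothesis HI : IRG_sequence gf mu theta eps x g d eps r t.

Lemma eps_pos k : 0 < eps k.
Proof. by case: HI => _ _ _ H _; exact: H. Qed.
Lemma irg_k k :
  [/\ enorm (g k - gf (x k)) <= Num.min (eps k) (eps k),
          (if enorm (g k) <= r k + eps k then
             [/\ r k.+1 = mu * r k, eps k.+1 = theta * eps k & d k = 0]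
           else
             [/\ r k.+1 = r k, eps k.+1 = eps k &
                 d k = - ((enorm (g k) - eps k) / enorm (g k)) *: g k]),
          0 < t k &
          x k.+1 = x k + t k *: d k].
Proof. by case: HI => _ _ _ _ H; exact: H. Qed.
Lemma mu01 : 0 < mu < 1. Proof. by case: HI. Qed.
Lemma theta01 : 0 < theta < 1. Proof. by case: HI. Qed.
Lemma r_pos k : 0 < r k.
Proof.
elim: k => [|k IH]; first by case: HI => -[].
case: (irg_k k) => _; case: ifP => _ [-> _ _] _ _ //.
by case/andP: mu01 => m0 _; rewrite mulr_gt0.
Qed.
Lemma t_pos k : 0 < t k. Proof. by case: (irg_k k). Qed.
Lemma gerr k : enorm (g k - gf (x k)) <= eps k.
Proof. by case: (irg_k k); rewrite minxx. Qed.

Lemma step_case k :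
  (d k = 0 /\ eps k.+1 = theta * eps k /\ r k.+1 = mu * r k /\ enorm (g k) <= r k + eps k)
  \/ (eps k.+1 = eps k /\ r k.+1 = r k /\ enorm (g k) = enorm (d k) + eps k /\ r k < enorm (d k)).
Proof.
case: (irg_k k) => _; case: ifP => hle [h1 h2 h3] _ _; first by left.
right; split => //; split => //.
have eg := eps_pos k; have rg := r_pos k.
have Gp : r k + eps k < enorm (g k) by rewrite ltNge hle.
have G0 : 0 < enorm (g k) by rewrite (lt_trans _ Gp) // addr_gt0.
have ed : enorm (d k) = enorm (g k) - eps k.
  rewrite h3 enormZ normrN ger0_norm; last by rewrite divr_ge0 // ?subr_ge0 ltW // (le_lt_trans _ Gp) // lerDr ltW.
  by rewrite -mulrA mulVf ?mulr1 // gt_eqF.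
rewrite ed; split; first by rewrite subrK.
by rewrite ltrBrDr.
Qed.

Lemma eps_le k : eps k.+1 <= eps k.
Proof.
case: (step_case k) => [[_ [-> _]]|[-> _]] //.
by case/andP: theta01 => _ h; rewrite ler_piMl // ?ltW // eps_pos.
Qed.
Lemma r_le k : r k.+1 <= r k.
Proof.
case: (step_case k) => [[_ [_ [-> _]]]|[_ [-> _]]] //.
by case/andP: mu01 => _ h; rewrite ler_piMl // ?ltW // r_pos.
Qed.
Lemma g_bound k : enorm (g k) <= enorm (d k) + r k + eps k.
Proof.
case: (step_case k) => [[-> [_ [_ h]]]|[_ [_ [-> _]]]].
  by rewrite enorm0 add0r.
by rewrite lerD2r lerDl ltW // r_pos.
Qed.
Lemma move_le k : `|x k.+1 - x k| <= t k * enorm (d k).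
Proof.
case: (irg_k k) => _ _ tp ->; rewrite addrC addKr (le_trans (mxnorm_le _)) //.
by rewrite enormZ gtr0_norm.
Qed.
Lemma gf_up k : `|gf (x k)| <= enorm (g k) + eps k.
Proof.
have -> : gf (x k) = g k - (g k - gf (x k)) by rewrite opprB addrC subrK.
rewrite (le_trans (ler_normB _ _)) // lerD // ?mxnorm_le //.
by rewrite (le_trans (mxnorm_le _)) // gerr.
Qed.
Lemma gf_low k : `|gf (x k)| - eps k <= enorm (g k).
Proof.
rewrite lerBlDr; have -> : gf (x k) = g k - (g k - gf (x k)) by rewrite opprB addrC subrK.
rewrite (le_trans (ler_normB _ _)) // lerD // ?mxnorm_le //.
by rewrite (le_trans (mxnorm_le _)) // gerr.
Qed.

Lemma descent k : f (x k.+1) <= f (x k) - t k * (1 - L * t k / 2) * enorm (d k) ^+ 2.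
Proof.
case: (step_case k) => [[d0 _]|[_ [_ [eG rd]]]].
  by case: (irg_k k) => _ _ _ ->; rewrite d0 scaler0 addr0 enorm0 expr0n /= mulr0 subr0.
case: (irg_k k) => _; case: ifP => hle [_ _ h3] tp ->.
  by rewrite eG lerD2r in hle; rewrite ltNge hle in rd.
set G := enorm (g k) in eG h3 *; set D := enorm (d k) in eG rd *.
have e0 : 0 < eps k := eps_pos k.
have rp := r_pos k.
have G0 : 0 < G by rewrite eG; lra.
have hP : dotv (gf (x k)) (d k) <= - D ^+ 2.
  have -> : gf (x k) = - (g k - gf (x k)) + g k by rewrite opprB subrK.
  rewrite dotvDl dotvNl.
  have h1 : - dotv (g k - gf (x k)) (d k) <= eps k * D.
    rewrite -dotvNl (le_trans (CS _ _)) // enormN ler_wpM2r // ?enorm_ge0 //.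
    exact: gerr.
  have h2 : dotv (g k) (d k) = - (D * G).
    rewrite h3 dotvZr -/(enorm (g k) ^+ 2) ?enorm_sq //.
    rewrite -enorm_sq -/G eG; field; rewrite -eG; exact: lt0r_neq0.
  rewrite h2; have : D = G - eps k by rewrite eG addrK.
  nra.
have := HD (x k) (x k + t k *: d k).
have -> : x k + t k *: d k - x k = t k *: d k by rewrite addrC addKr.
rewrite dotvZr enormZ gtr0_norm // -/D => h.
apply: (le_trans h); nra.
Qed.
End IRG.
Section Core.
Context {R : realType}.
Variables (F D t : nat -> R) (K0 : nat) (kap T lb : R).
Hypothesis kap0 : 0 < kap.
Hypothesis tpos : forall k, 0 < t k.
Hypothesis tle : forall k, t k <= T.
Hypothesis Flb : forall k, lb <= F k.
Hypothesis Fdec : forall k, (K0 <= k)%N -> F k.+1 <= F k - kap * t k * D k ^+ 2.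
Hypothesis Dge0 : forall k, 0 <= D k.
Hypothesis tdiv : forall k M, exists m, (k <= m)%N /\ M <= \sum_(k <= j < m) t j.

Lemma Fstep k : (K0 <= k)%N -> F k.+1 <= F k.
Proof.
move=> h; apply: (le_trans (Fdec _ h)); rewrite lerBlDr lerDl.
by rewrite mulr_ge0 // ?sqr_ge0 // mulr_ge0 // ltW.
Qed.

Lemma Fmono {k m} : (K0 <= k)%N -> (k <= m)%N -> F m <= F k.
Proof.
move=> h; elim: m => [|m IH]; first by rewrite leqn0 => /eqP ->.
rewrite leq_eqVlt => /orP [/eqP -> //|]; rewrite ltnS => km.
apply: le_trans (IH km); apply: Fstep; exact: leq_trans km.
Qed.

Lemma R1 k beta : 0 < beta -> ~ (forall j, (k <= j)%N -> beta <= D j).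
Proof.
move=> b0 H; set k' := maxn k K0.
have hk : (k <= k')%N by rewrite leq_maxl.
have hK : (K0 <= k')%N by rewrite leq_maxr.
have key : forall m, (k' <= m)%N ->
    F m <= F k' - kap * beta ^+ 2 * \sum_(k' <= j < m) t j.
  elim => [|m IH]; first by rewrite leqn0 => /eqP ->; rewrite big_geq // mulr0 subr0.
  rewrite leq_eqVlt => /orP [/eqP <-|]; first by rewrite big_geq // mulr0 subr0.
  rewrite ltnS => km; rewrite big_nat_recr //= mulrDr opprD addrA.
  apply: (le_trans (Fdec _ (leq_trans hK km))).
  have hb : beta ^+ 2 <= D m ^+ 2.
    rewrite ler_pXn2r ?nnegrE ?Dge0 ?(ltW b0) //; apply: H; exact: leq_trans hk km.
  have tm := tpos m; have := IH km.
  have : kap * t m * beta ^+ 2 <= kap * t m * D m ^+ 2.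
    by rewrite ler_wpM2l // mulr_ge0 // ltW.
  lra.
have bb : 0 < kap * beta ^+ 2 by rewrite mulr_gt0 // exprn_gt0.
have [m [km hm]] := tdiv k' ((F k' - lb + 1) / (kap * beta ^+ 2)).
have := key m km; have := Flb m.
rewrite ler_pdivrMr // in hm.
lra.
Qed.

Lemma Cauchy e : 0 < e ->
  exists K, forall k m, (K <= k)%N -> (k <= m)%N -> F k - F m <= e.
Proof.
move=> e0; apply: contrapT => /forallNP H.
have H' : forall K, exists k m, [/\ (K <= k)%N, (k <= m)%N & e < F k - F m].
  move=> K; have /existsNP [k /existsNP [m]] := H K.
  move=> /not_implyP [Kk /not_implyP [km]] /negP; rewrite -ltNge => h.
  by exists k, m.
have key : forall j : nat, exists m, (K0 <= m)%N /\ F m <= F K0 - j%:R * e.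
  elim => [|j [m [Km hm]]]; first by exists K0; rewrite mul0r subr0.
  have [k [m' [mk km' h]]] := H' m.
  exists m'; split; first by rewrite (leq_trans Km) // (leq_trans mk).
  have := Fmono Km mk; rewrite -natr1 mulrDl mul1r; lra.
have hx : 0 <= (F K0 - lb) / e.
  by rewrite divr_ge0 ?subr_ge0 ?Flb ?(ltW e0).
have [m [_ hm]] := key (Num.Def.archi_bound ((F K0 - lb) / e)).
have := archi_boundP hx; rewrite ltr_pdivrMr // => h2.
have := Flb m; lra.
Qed.

Lemma R2 e : 0 < e -> exists K, forall k, (K <= k)%N -> t k * D k < e.
Proof.
move=> e0.
have T0 : 0 < T by apply: lt_le_trans (tle 0%N).
have ep : 0 < kap * e ^+ 2 / (2 * T) by rewrite divr_gt0 // ?mulr_gt0 // exprn_gt0.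
have [K HK] := Cauchy _ ep.
exists (maxn K K0) => k hk.
have h1 := HK k k.+1 (leq_trans (leq_maxl _ _) hk) (leqnSn k).
have h2 := Fdec _ (leq_trans (leq_maxr _ _) hk).
have h3 : t k * D k ^+ 2 <= e ^+ 2 / (2 * T).
  rewrite -(ler_pM2l kap0) mulrA; apply: le_trans (_ : F k - F k.+1 <= _).
    lra.
  by rewrite mulrA.
have h4 : (t k * D k) ^+ 2 <= e ^+ 2 / 2.
  have -> : (t k * D k) ^+ 2 = t k * (t k * D k ^+ 2) by rewrite exprMn expr2 mulrA.
  apply: (le_trans (y := T * (e ^+ 2 / (2 * T)))).
    apply: ler_pM => //; [exact: ltW|by rewrite mulr_ge0 ?sqr_ge0 // ltW].
  by rewrite le_eqVlt; apply/orP; left; apply/eqP; field; exact: lt0r_neq0.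
have e2 : 0 < e ^+ 2 by rewrite exprn_gt0.
have tD : 0 <= t k * D k by rewrite mulr_ge0 // ltW.
rewrite -(@ltr_pXn2r _ 2) // ?nnegrE ?(ltW e0) //; lra.
Qed.

Lemma R3 dl : 0 < dl -> (forall k, dl <= t k) ->
  forall e, 0 < e -> exists K, forall k, (K <= k)%N -> D k < e.
Proof.
move=> dl0 hdl e e0.
have ep : 0 < kap * dl * e ^+ 2 / 2 by rewrite divr_gt0 // ?mulr_gt0 // exprn_gt0.
have [K HK] := Cauchy _ ep.
exists (maxn K K0) => k hk.
have h1 := HK k k.+1 (leq_trans (leq_maxl _ _) hk) (leqnSn k).
have h2 := Fdec _ (leq_trans (leq_maxr _ _) hk).
have h3 : kap * dl * D k ^+ 2 <= kap * t k * D k ^+ 2.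
  by rewrite ler_wpM2r ?sqr_ge0 // ler_wpM2l // ltW.
have h4 : D k ^+ 2 <= e ^+ 2 / 2.
  have kd : 0 < kap * dl by rewrite mulr_gt0.
  rewrite -(ler_pM2l kd); apply: (le_trans h3).
  have -> : kap * dl * (e ^+ 2 / 2) = kap * dl * e ^+ 2 / 2 by rewrite mulrA.
  lra.
have e2 : 0 < e ^+ 2 by rewrite exprn_gt0.
rewrite -(@ltr_pXn2r _ 2) // ?nnegrE ?(ltW e0) //; lra.
Qed.
End Core.
Section Top.
Context {R : realType} {n : nat}.
Variable x : nat -> 'rV[R]_n.

Lemma ball_normP (p q : 'rV[R]_n) e : ball p e q <-> `|p - q| < e.
Proof. by rewrite -ball_normE. Qed.

Lemma cluster_extract p : acc_points x p ->
  forall e, 0 < e -> forall N, exists k, (N <= k)%N /\ `|p - x k| < e.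
Proof.
move=> hp e e0 N.
have hA : (x @ \oo) [set y | exists k, (N <= k)%N /\ y = x k].
  by exists N => // k /= hk; exists k.
have := hp _ (ball p e) hA (nbhsx_ballx _ _ e0).
by case => y [[k [hk ->]] /ball_normP hb]; exists k; split.
Qed.

Lemma cluster_intro (C : set 'rV[R]_n) : compact C ->
  (forall N, exists k, (N <= k)%N /\ C (x k)) -> exists q, C q /\ acc_points x q.
Proof.
move=> cC inf.
set G := filter_from [set: nat] (fun N => [set y | exists k, [/\ (N <= k)%N, C (x k) & y = x k]]).
have FG : Filter G.
  apply: filter_from_filter; first by exists 0%N.
  move=> i j _ _; exists (maxn i j) => // y [k [hk hC ->]]; split; exists k; split => //.
    exact: leq_trans (leq_maxl _ _) hk.
  exact: leq_trans (leq_maxr _ _) hk.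
have PG : ProperFilter G.
  apply: filter_from_proper => N _; have [k [hk hC]] := inf N.
  by exists (x k), k.
have GC : G C by exists 0%N => // y [k [_ hC ->]].
have [q [Cq clq]] := cC G PG GC.
exists q; split => //.
apply: (cvg_cluster (G := x @ \oo) _ clq).
move=> A [N _ hA]; exists N => // y [k [hk _ ->]]; exact: hA.
Qed.

Lemma acc_closed : closed (acc_points x).
Proof. by rewrite /acc_points clusterE; apply: closed_bigI => A _; exact: closed_closure. Qed.

Lemma acc_sub_closed (C : set 'rV[R]_n) : closed C -> (forall k, C (x k)) -> acc_points x `<=` C.
Proof.
move=> cC hx q; rewrite /acc_points clusterE => hq.
have hC : (x @ \oo) C by exists 0%N => // k _; exact: hx.
exact: cC (hq C hC).
Qed.

Lemma cball_compact (c : 'rV[R]_n) e : compact [set z | `|c - z| <= e].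
Proof.
apply: bounded_closed_compact; last by have := @closed_closed_ball_ R _ c e.
exists (`|c| + e); split; first by rewrite num_real.
move=> M hM z /= hz; rewrite (le_trans _ (ltW hM)) //.
have -> : z = c - (c - z) by rewrite opprB addrC subrK.
by rewrite (le_trans (ler_normB _ _)) // lerD2l.
Qed.

Lemma propagate (W : set 'rV[R]_n) k : (forall j, (k <= j)%N -> W (x j) -> W (x j.+1)) ->
  W (x k) -> forall m, (k <= m)%N -> W (x m).
Proof.
move=> hW hk; elim => [|m IH]; first by rewrite leqn0 => /eqP <-.
rewrite leq_eqVlt => /orP [/eqP <- //|]; rewrite ltnS => km.
exact: hW km (IH km).
Qed.

Lemma eventually_out (C : set 'rV[R]_n) : compact C -> C `&` acc_points x = set0 ->
  exists N, forall k, (N <= k)%N -> ~ C (x k).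
Proof.
move=> cC hC; apply: contrapT => /forallNP H.
have : forall N, exists k, (N <= k)%N /\ C (x k).
  move=> N; have /existsNP [k /not_implyP [hk /contrapT hz]] := H N.
  by exists k.
move/(cluster_intro C cC) => [q [Cq Aq]].
by have : (C `&` acc_points x) q by []; rewrite hC.
Qed.

Lemma sep_lemma (E0 E1 : set 'rV[R]_n) : compact E0 -> closed E1 -> E0 `&` E1 = set0 ->
  exists2 de, 0 < de & forall a b, E0 a -> E1 b -> de <= `|a - b|.
Proof.
move=> cE0 cE1 dis; apply: contrapT => H.
have H' : forall de, 0 < de -> exists a b, [/\ E0 a, E1 b & `|a - b| < de].
  move=> de de0; apply: contrapT => H2; apply: H; exists de => // a b Ea Eb.
  rewrite leNgt; apply/negP => hlt; apply: H2; by exists a, b.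
set G := filter_from [set de : R | 0 < de]
  (fun de => [set a | E0 a /\ exists b, E1 b /\ `|a - b| < de]).
have FG : Filter G.
  apply: filter_from_filter; first by exists 1 => /=.
  move=> i j /= i0 j0; exists (Num.min i j); first by rewrite /= lt_min i0.
  move=> a [Ea [b [Eb hb]]]; split; split => //; exists b; split => //;
    apply: (lt_le_trans hb); rewrite ge_min lexx ?orbT //.
have PG : ProperFilter G.
  apply: filter_from_proper => de /= de0; have [a [b [Ea Eb hb]]] := H' de de0.
  by exists a; split => //; exists b.
have GE : G E0 by exists 1 => //= a [].
have [q [E0q clq]] := cE0 G PG GE.
have : closure E1 q.
  move=> B /nbhs_ballP [e /= e0 hB].
  have e2 : 0 < e / 2 by rewrite divr_gt0.
  have GS : G [set a | E0 a /\ exists b, E1 b /\ `|a - b| < e / 2] by exists (e / 2).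
  have [a [[Ea [b [Eb hb]]] /ball_normP ha]] := clq _ _ GS (nbhsx_ballx _ _ e2).
  exists b; split => //; apply: hB; apply/ball_normP.
  have -> : q - b = (q - a) + (a - b) by rewrite addrA subrK.
  rewrite (le_lt_trans (ler_normD _ _)) //.
  by rewrite (splitr e) ltrD.
move/cE1 => E1q.
by have : (E0 `&` E1) q by []; rewrite dis.
Qed.

Definition steps0 := forall e, 0 < e -> exists K, forall k, (K <= k)%N -> `|x k.+1 - x k| < e.

Lemma part_iv p : steps0 -> isolated_in (acc_points x) p -> x @ \oo --> p.
Proof.
move=> hs [Ap [U [/nbhs_ballP [e0 /= e00 hU0] hU]]].
apply/cvgrPdist_lt => e ep.
set e' := Num.min e (e0 / 3).
have e'0 : 0 < e' by rewrite lt_min ep divr_gt0.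
have e'e : e' <= e by rewrite ge_min lexx.
have e'3 : e' <= e0 / 3 by rewrite ge_min lexx orbT.
set Z := [set z | `|p - z| <= 2 * e'] `&` ~` ball p e'.
have cZ : compact Z.
  apply: (subclosed_compact _ (cball_compact p (2 * e'))); last by move=> z [].
  apply: closedI; first by have := @closed_closed_ball_ R _ p (2 * e').
  exact/open_closedC/ball_open.
have [N1 HN1] : exists N, forall k, (N <= k)%N -> ~ Z (x k).
  apply: eventually_out => //; apply/seteqP; split => // q [[hq nb] Aq].
  have : (U `&` acc_points x) q.
    split => //; apply: hU0; apply/ball_normP; apply: le_lt_trans hq _.
    have : 0 < e0 by []; lra.
  rewrite hU => /= qp; apply: nb; rewrite qp; apply/ball_normP; by rewrite subrr normr0.
have [K2 HK2] := hs e' e'0.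
have [k0 [hk0 pk0]] := cluster_extract p Ap e' e'0 (maxn N1 K2).
have all : forall m, (k0 <= m)%N -> ball p e' (x m).
  apply: propagate; last exact/ball_normP.
  move=> j hj /ball_normP bj; apply: contrapT => nb.
  have hj1 : (N1 <= j.+1)%N by move: hk0 hj; lia.
  apply: (HN1 _ hj1); split => //=.
  have -> : p - x j.+1 = (p - x j) - (x j.+1 - x j) by rewrite opprB addrA subrK.
  rewrite (le_trans (ler_normB _ _)) //.
  have : (K2 <= j)%N by move: hk0 hj; lia.
  move/HK2; lra.
exists k0 => // m /= hm; have /ball_normP := all m hm; lra.
Qed.

Lemma part_iii M : steps0 -> (forall k, `|x k| <= M) ->
  [/\ acc_points x !=set0, compact (acc_points x) & connected (acc_points x)].
Proof.
move=> hs hM.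
set Bc := [set z : 'rV[R]_n | `|0 - z| <= M].
have hB : forall k, Bc (x k) by move=> k; rewrite /Bc /= sub0r normrN.
have cB : compact Bc := cball_compact 0 M.
have clB : closed Bc by rewrite /Bc; have := @closed_closed_ball_ R 'rV[R]_n 0 M.
have AB : acc_points x `<=` Bc := acc_sub_closed Bc clB hB.
have cA : compact (acc_points x) := subclosed_compact acc_closed cB AB.
split => //.
  have [q [_ Aq]] := cluster_intro Bc cB (fun N => ex_intro _ N (conj (leqnn N) (hB N))).
  by exists q.
apply: contrapT => /connectedPn [E [Ene AU [s1 s2]]].
have clE : forall b, closed (E b).
  move=> b z cz.
  have Az : acc_points x z.
    apply: acc_closed; apply: (closureS _ cz); rewrite AU; case: b {cz} => ?; by [left|right].
  have : (E false `|` E true) z by rewrite -AU.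
  case: b cz => cz [] // hz.
    by have : (closure (E true) `&` E false) z by []; rewrite setIC s2.
  by have : (closure (E false) `&` E true) z by []; rewrite s1.
have cE : forall b, compact (E b).
  move=> b; apply: subclosed_compact (clE b) cA _; rewrite AU; case: b => ?; by [left|right].
have dis : E false `&` E true = set0.
  by apply/seteqP; split => // z [hf ht]; rewrite -s1; split => //; exact: subset_closure.
have [de de0 hde] := sep_lemma _ _ (cE false) (clE true) dis.
have de3 : 0 < de / 3 by rewrite divr_gt0.
set W := fun b => \bigcup_(a in E b) ball a (de / 3).
have oW : forall b, open (W b) by move=> b; apply: bigcup_open => a _; exact: ball_open.
have WW : forall z, W false z -> W true z -> False.
  move=> z [a Ea /ball_normP ha] [b Eb /ball_normP hb].
  have := hde a b Ea Eb.
  have -> : a - b = (a - z) - (b - z) by rewrite opprB addrA subrK.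
  have := ler_normB (a - z) (b - z); lra.
set Z := Bc `&` ~` W false `&` ~` W true.
have cZ : compact Z.
  apply: (subclosed_compact _ cB); last by move=> z [[]].
  apply: closedI; first apply: closedI => //; exact/open_closedC.
have [N1 HN1] : exists N, forall k, (N <= k)%N -> ~ Z (x k).
  apply: eventually_out => //; apply/seteqP; split => // q [[[_ n0] n1] Aq].
  have : (E false `|` E true) q by rewrite -AU.
  case => hq; [apply: n0 | apply: n1]; exists q => //; apply/ball_normP;
    by rewrite subrr normr0.
have inW : forall k, (N1 <= k)%N -> W false (x k) \/ W true (x k).
  move=> k hk; apply: contrapT => /not_orP [h0 h1]; exact: (HN1 k hk).
have [K2 HK2] := hs (de / 3) de3.
set K := maxn N1 K2.
have prop : forall b k, (K <= k)%N -> W b (x k) -> W b (x k.+1).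
  move=> b k hk [a Ea /ball_normP ha].
  have hk1 : (N1 <= k.+1)%N by move: hk; rewrite /K; lia.
  have hk2 : (K2 <= k)%N by move: hk; rewrite /K; lia.
  have st := HK2 k hk2.
  case: (inW _ hk1); case: b Ea ha => Ea ha // [c Ec /ball_normP hc]; exfalso.
    have := hde c a Ec Ea.
    have h1 := ler_distD (x k.+1) c a.
    have h2 := ler_distD (x k) (x k.+1) a.
    rewrite (distrC (x k) a) in h2; lra.
  have := hde a c Ea Ec.
  have h1 := ler_distD (x k) a c.
  have h2 := ler_distD (x k.+1) (x k) c.
  rewrite (distrC (x k) (x k.+1)) (distrC (x k.+1) c) in h2; lra.
have visit : forall b, exists k, (K <= k)%N /\ W b (x k).
  move=> b; have [a Ea] := Ene b.
  have Aa : acc_points x a by rewrite AU; case: b Ea => ?; by [left|right].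
  have [k [hk hka]] := cluster_extract a Aa (de / 3) de3 K.
  by exists k; split => //; exists a => //; apply/ball_normP.
have [k0 [hk0 w0]] := visit false.
have [k1 [hk1 w1]] := visit true.
set m := maxn k0 k1.
apply: (WW (x m)).
  by apply: (propagate (W false) k0 _ w0); [move=> j hj; apply: prop; exact: leq_trans hk0 hj | exact: leq_maxl].
by apply: (propagate (W true) k1 _ w1); [move=> j hj; apply: prop; exact: leq_trans hk1 hj | exact: leq_maxr].
Qed.
End Top.
Lemma ind_from (P : nat -> Prop) k : P k -> (forall j, (k <= j)%N -> P j -> P j.+1) ->
  forall m, (k <= m)%N -> P m.
Proof.
move=> hk hP; elim => [|m IH]; first by rewrite leqn0 => /eqP <-.
rewrite leq_eqVlt => /orP [/eqP <- //|]; rewrite ltnS => km.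
exact: hP km (IH km).
Qed.

Lemma ev_of (P : nat -> Prop) : (\forall k \near \oo, P k) -> exists N, forall k, (N <= k)%N -> P k.
Proof. move=> [N _ H]; exists N => k; exact: H. Qed.

Lemma to0 {R : realType} {V : normedModType R} (u : nat -> V) :
  (forall e, 0 < e -> exists K, forall k, (K <= k)%N -> `|u k| < e) -> u @ \oo --> 0.
Proof.
move=> H; apply/cvgrPdist_lt => e e0; have [K HK] := H e e0.
by exists K => // k /= hk; rewrite sub0r normrN; exact: HK.
Qed.

Lemma decay {R : realType} (u : nat -> R) a : 0 < a < 1 -> (forall k, 0 < u k) ->
  (forall k, u k.+1 <= u k) -> (forall K, exists k, (K <= k)%N /\ u k.+1 = a * u k) ->
  forall e, 0 < e -> exists K, forall k, (K <= k)%N -> u k < e.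
Proof.
move=> /andP [a0 a1] upos udec inf e e0.
have mono : forall k m, (k <= m)%N -> u m <= u k.
  move=> k; apply: ind_from => // j _ h; exact: le_trans (udec j) h.
have key : forall j, exists K, u K <= a ^+ j * u 0%N.
  elim => [|j [K hK]]; first by exists 0%N; rewrite expr0 mul1r.
  have [k [Kk hk]] := inf K; exists k.+1; rewrite hk exprS -mulrA.
  apply: ler_wpM2l; [exact: ltW | exact: le_trans (mono _ _ Kk) hK].
have u0 := upos 0%N.
have : (GRing.exp a : R ^nat) @ \oo --> 0 by apply: cvg_expr; rewrite ger0_norm ?ltW.
move/cvgrPdist_lt => /(_ (e / u 0%N)); rewrite divr_gt0 // => /(_ isT) /ev_of [N HN].
have := HN N (leqnn N); rewrite sub0r normrN ger0_norm ?exprn_ge0 ?ltW // ltr_pdivlMr // => hN.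
have [K hK] := key N; exists K => k hk.
by apply: le_lt_trans (mono _ _ hk) _; apply: le_lt_trans hK _.
Qed.

Arguments t_pos {R n gf mu theta x g d eps r t}.
Arguments eps_pos {R n gf mu theta x g d eps r t}.
Arguments r_pos {R n gf mu theta x g d eps r t}.
Arguments eps_le {R n gf mu theta x g d eps r t}.
Arguments r_le {R n gf mu theta x g d eps r t}.
Arguments mu01 {R n gf mu theta x g d eps r t}.
Arguments theta01 {R n gf mu theta x g d eps r t}.
Arguments step_case {R n gf mu theta x g d eps r t}.
Arguments move_le {R n gf mu theta x g d eps r t}.
Arguments gf_low {R n gf mu theta x g d eps r t}.
Arguments gf_up {R n gf mu theta x g d eps r t}.
Arguments g_bound {R n gf mu theta x g d eps r t}.
Arguments descent {R n f gf L mu theta x g d eps r t}.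
Arguments cluster_extract {R n x}.
Arguments part_iii {R n x M}.
Arguments part_iv {R n x}.

Lemma sum_lb {R : realType} (t : nat -> R) dl : (forall k, dl <= t k) ->
  forall k N, N%:R * dl <= \sum_(k <= j < k + N) t j.
Proof.
move=> ht k; elim => [|N IH]; first by rewrite addn0 big_geq // mul0r.
rewrite addnS big_nat_recr ?leq_addr //= -natr1 mulrDl mul1r.
exact: lerD IH (ht _).
Qed.

Section Arith.
Context {R : realType}.
Lemma A1 (c a b g e rr : R) : 0 < c -> a < c / 4 -> c <= a + b -> b - e <= g -> e < c / 8 ->
  rr < c / 8 -> g <= rr + e -> False.
Proof. lra. Qed.
Lemma A2 (c a b g e Dd : R) : 0 < c -> a < c / 4 -> c <= a + b -> b - e <= g -> e < c / 8 ->
  g = Dd + e -> c / 4 <= Dd.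
Proof. lra. Qed.
Lemma A3 (a de : R) : 0 < de -> a < de / 2 -> a < de.
Proof. lra. Qed.
Lemma A4 (u v Fk Fj Fj1 P Q : R) : v <= Fk - Fj -> Fj1 <= Fj - Q -> P <= Q -> u <= P ->
  u + v <= Fk - Fj1.
Proof. lra. Qed.
Lemma A5 (a b c de : R) : 0 < de -> a <= b + c -> c <= de / 2 / 2 -> b < de / 2 -> a < de.
Proof. lra. Qed.
Lemma N1 (a b k : nat) : (maxn a b <= k)%N -> (a <= k)%N /\ (b <= k)%N.
Proof. lia. Qed.
Lemma N2 (a b c e k j : nat) : (maxn a (maxn b (maxn c e)) <= k)%N -> (k <= j)%N ->
  [/\ (a <= j)%N, (b <= k)%N & (maxn c e <= j)%N].
Proof.
rewrite !geq_max => /and3P [ha hb /andP [hc he]] kj.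
split => //; first exact: leq_trans ha kj.
by rewrite (leq_trans hc kj) (leq_trans he kj).
Qed.
End Arith.
Arguments N1 {a b k}.
Arguments N2 {a b c e k j}.
Arguments A1 {R c a b g e rr}.
Arguments A2 {R c a b g e Dd}.
Arguments A3 {R a de}.
Arguments A4 {R u v Fk Fj Fj1 P Q}.
Arguments A5 {R a b c de}.

Theorem mainTheorem11 (R : realType) (n : nat)
  (f : 'rV[R]_n -> R) (gf : 'rV[R]_n -> 'rV[R]_n) (L : R)
  (mu theta : R) (x g d : nat -> 'rV[R]_n) (eps r t : nat -> R) :
  C1_with_gradient f gf ->
  0 < L -> L_descent f gf L ->
  IRG_sequence gf mu theta eps x g d eps r t ->
  diminishing_steps t \/ constant_type_steps L t ->
  (exists m : R, forall k, m <= f (x k)) ->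
  [/\ ((forall k, eps k.+1 <= eps k) /\ eps @ \oo --> 0) /\
      ((forall k, r k.+1 <= r k) /\ r @ \oo --> 0),
      (forall p, acc_points x p -> gf p = 0),
      ((exists M : R, forall k, enorm (x k) <= M) ->
         [/\ acc_points x !=set0, compact (acc_points x)
           & connected (acc_points x)]),
      (forall p, isolated_in (acc_points x) p -> x @ \oo --> p) &
      (constant_type_steps L t -> (fun k => gf (x k)) @ \oo --> (0 : 'rV[R]_n))].
Proof.
move=> [Hdiff Hcont] L0 HD HI Hst [lb Hlb].
have tpos := t_pos HI.
have [K0 [kap [T [kap0 tle Fdec tdiv]]]] : exists K0 kap T, [/\ 0 < kap,
    forall k, t k <= T,
    forall k, (K0 <= k)%N -> f (x k.+1) <= f (x k) - kap * t k * enorm (d k) ^+ 2 &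
    forall k M, exists m, (k <= m)%N /\ M <= \sum_(k <= j < m) t j].
  case: Hst => [[tp tdec tcvg tser]|[de [dl [/andP [de0 de2] dl0 dlle ht]]]].
    have tmono : forall k, t k <= t 0%N.
      by elim => // k IH; exact: le_trans (tdec k) IH.
    have L10 : 0 < 1 / L by rewrite divr_gt0.
    move/cvgrPdist_lt: tcvg => /(_ (1 / L) L10) /ev_of [K0 HK0].
    exists K0, (1 / 2), (t 0%N); split => //.
      move=> k hk; apply: le_trans (descent HD HI k) _.
      have := HK0 k hk; rewrite sub0r normrN gtr0_norm // ltr_pdivlMr // mul1r => htk.
      have h0 : 0 <= t k * enorm (d k) ^+ 2 * (1 - t k * L).
        apply: mulr_ge0; [apply: mulr_ge0; [exact: ltW | exact: sqr_ge0] | by rewrite subr_ge0 ltW].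
      nra.
    move=> k M; move/cvgryPge: tser => /(_ (M + series t k)) /ev_of [N HN].
    exists (maxn k N); split; first exact: leq_maxl.
    have := HN _ (leq_maxr k N).
    rewrite /series /= (@big_cat_nat _ _ _ k 0 (maxn k N)) //= ?leq_maxl //.
    lra.
  exists 0%N, (de / 2), ((2 - de) / L); split.
  - by rewrite divr_gt0.
  - by move=> k; case/andP: (ht k).
  - move=> k _; apply: le_trans (descent HD HI k) _.
    have /andP [h1 h2] := ht k.
    rewrite ler_pdivlMr // mulrC in h2.
    have h0 : 0 <= t k * enorm (d k) ^+ 2 * (2 - de - L * t k).
      apply: mulr_ge0; [apply: mulr_ge0; [exact: ltW | exact: sqr_ge0] | move: h2; nra].
    nra.
  - move=> k M; exists (k + Num.Def.archi_bound (`|M| / dl))%N; split; first exact: leq_addr.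
    apply: (le_trans _ (@sum_lb _ t dl (fun k => proj1 (andP (ht k))) k _)).
    have := @archi_boundP _ (`|M| / dl) (divr_ge0 (normr_ge0 M) (ltW dl0)).
    rewrite ltr_pdivrMr // => h.
    have := ler_norm M; lra.
pose F := fun k => f (x k); pose D := fun k => enorm (d k).
have Flb : forall k, lb <= F k := Hlb.
have Dge0 : forall k, 0 <= D k by move=> k; exact: enorm_ge0.
have hR1 := @R1 _ F D t K0 kap lb kap0 tpos Flb Fdec Dge0 tdiv.
have hCa := @Cauchy _ F D t K0 kap lb kap0 tpos Flb Fdec.
have hR2 := @R2 _ F D t K0 kap T lb kap0 tpos tle Flb Fdec Dge0.
have inf_null : forall K, exists k, (K <= k)%N /\
    (d k = 0 /\ eps k.+1 = theta * eps k /\ r k.+1 = mu * r k).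
  move=> K; apply: contrapT => /forallNP H.
  have nn : forall k, (K <= k)%N -> eps k.+1 = eps k /\ r k.+1 = r k /\ r k < D k.
    move=> k hk; case: (step_case HI k) => [[h1 [h2 [h3 _]]]|[h1 [h2 [_ h4]]]]; last by [].
    by exfalso; apply: (H k); split.
  have rc : forall k, (K <= k)%N -> r k = r K.
    apply: ind_from => // j hj <-; by have [_ [-> _]] := nn j hj.
  apply: (hR1 K (r K) (r_pos HI K)) => j hj; have [_ [_ h]] := nn j hj.
  by rewrite -(rc j hj); exact: ltW.
have epsto : forall e, 0 < e -> exists K, forall k, (K <= k)%N -> eps k < e.
  apply: (@decay _ eps theta (theta01 HI) (eps_pos HI) (eps_le HI)) => K.
  by have [k [hk [_ [h _]]]] := inf_null K; exists k.
have rto : forall e, 0 < e -> exists K, forall k, (K <= k)%N -> r k < e.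
  apply: (@decay _ r mu (mu01 HI) (r_pos HI) (r_le HI)) => K.
  by have [k [hk [_ [_ h]]]] := inf_null K; exists k.
have hsteps : steps0 x.
  move=> e e0; have [K HK] := hR2 e e0; exists K => k hk.
  exact: le_lt_trans (move_le HI k) (HK k hk).
split.
- split; split; first exact: (eps_le HI).
  + apply: to0 => e e0; have [K HK] := epsto e e0; exists K => k hk.
    by rewrite ger0_norm ?(ltW (eps_pos HI k)) //; exact: HK.
  + exact: (r_le HI).
  + apply: to0 => e e0; have [K HK] := rto e e0; exists K => k hk.
    by rewrite ger0_norm ?(ltW (r_pos HI k)) //; exact: HK.
- move=> p Ap; apply: contrapT => /eqP gp0.
  set c := `|gf p|.
  have c0 : 0 < c by rewrite normr_gt0.
  have c4 : 0 < c / 4 by rewrite divr_gt0.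
  have c8 : 0 < c / 8 by rewrite divr_gt0.
  have [de de0 hde] : exists2 de, 0 < de & forall z, `|p - z| < de -> `|gf p - gf z| < c / 4.
    have := Hcont p; move/cvgrPdist_lt => /(_ _ c4) /nbhs_ballP [de /= de0 hb].
    by exists de => // z hz; apply: (hb z); exact/ball_normP.
  have [Ke HKe] := epsto _ c8; have [Kr HKr] := rto _ c8.
  have Dbig : forall k, (maxn Ke Kr <= k)%N -> `|p - x k| < de -> c / 4 <= D k.
    move=> k hk hx.
    have h1 := hde _ hx.
    have h2 : c <= `|gf p - gf (x k)| + `|gf (x k)|.
      by have := ler_normD (gf p - gf (x k)) (gf (x k)); rewrite subrK.
    have h3 := gf_low HI k.
    have he : eps k < c / 8 by apply: HKe; exact: (N1 hk).1.
    have hr : r k < c / 8 by apply: HKr; exact: (N1 hk).2.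
    case: (step_case HI k) => [[_ [_ [_ h4]]]|[_ [_ [h4 _]]]].
      by exfalso; exact: (A1 c0 h1 h2 h3 he hr h4).
    exact: (A2 c0 h1 h2 h3 he h4).
  set rho := de / 2; set beta := c / 4.
  have rho0 : 0 < rho by rewrite divr_gt0.
  have kb : 0 < kap * beta by rewrite mulr_gt0.
  have kbr : 0 < kap * beta * rho / 2 by rewrite divr_gt0 // mulr_gt0.
  have [K1 HK1] := hCa _ kbr.
  set K := maxn K0 (maxn K1 (maxn Ke Kr)).
  have [k [hk hxk]] := cluster_extract p Ap rho rho0 K.
  have all : forall m, (k <= m)%N -> `|p - x m| < de /\ kap * beta * `|x m - x k| <= F k - F m.
    apply: ind_from.
      split; first exact: (A3 de0 hxk).
      by rewrite subrr normr0 mulr0 subrr.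
    move=> j hj [hpj hsum].
    have [hK0 hK1 hjK] := N2 hk hj.
    have Dj := Dbig j hjK hpj.
    have hF : F j.+1 <= F j - kap * t j * D j ^+ 2 by apply: Fdec.
    have hmv := move_le HI j.
    have hc : F k - F j.+1 <= kap * beta * rho / 2.
      by apply: HK1 => //; exact: leqW.
    have tri : `|x j.+1 - x k| <= `|x j.+1 - x j| + `|x j - x k| := ler_distD _ _ _.
    have prod : kap * beta * (t j * D j) <= kap * t j * D j ^+ 2.
      have -> : kap * beta * (t j * D j) = kap * (t j * D j) * beta by ring.
      have -> : kap * t j * D j ^+ 2 = kap * (t j * D j) * D j by rewrite expr2; ring.
      apply: ler_wpM2l => //.
      by apply: mulr_ge0; [exact: ltW | apply: mulr_ge0; [exact: ltW | exact: Dge0]].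
    have h1 : kap * beta * `|x j.+1 - x k| <= F k - F j.+1.
      apply: le_trans (ler_wpM2l (ltW kb) tri) _.
      rewrite mulrDr.
      exact: (A4 hsum hF prod (ler_wpM2l (ltW kb) hmv)).
    split => //.
    have h2 : `|x j.+1 - x k| <= rho / 2.
      rewrite -(ler_pM2l kb) (_ : kap * beta * (rho / 2) = kap * beta * rho / 2); last by rewrite mulrA.
      exact: le_trans h1 hc.
    have := ler_distD (x k) p (x j.+1); rewrite (distrC (x k) (x j.+1)).
    move=> h; exact: (A5 de0 h h2 hxk).
  apply: (hR1 k beta c4) => j hj; have [_ _ hjK] := N2 hk hj; exact: Dbig j hjK (proj1 (all j hj)).
- move=> [M hM]; apply: (part_iii hsteps) => k; exact: le_trans (mxnorm_le _) (hM k).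
- move=> p; exact: part_iv hsteps.
- move=> [de [dl [_ dl0 _ ht]]].
  have hR3 := @R3 _ F D t K0 kap lb kap0 tpos Flb Fdec Dge0 dl dl0 (fun k => proj1 (andP (ht k))).
  apply: to0 => e e0.
  have e4 : 0 < e / 4 by rewrite divr_gt0.
  have [K1 H1] := hR3 _ e4; have [K2 H2] := epsto _ e4; have [K3 H3] := rto _ e4.
  exists (maxn K1 (maxn K2 K3)) => k hk.
  have [h1 /N1 [h2 h3]] := N1 hk.
  have := gf_up HI k; have := g_bound HI k; have := H1 k h1; have := H2 k h2; have := H3 k h3.
  rewrite /D; lra.
Qed.
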